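(* $\mathfrak{mc}(\mathsf{null},\subseteq)=\operatorname{non}(\mathsf{null})$.
   Context: $\mathsf{null}$ is the ideal of Lebesgue measure zero subsets of $2^\omega$, ordered by inclusion. For a poset $P$, a chain is a set of pairwise comparable elements and $\mathfrak{mc}(P)$ is the minimal cardinality of a maximal (under inclusion) chain. $\operatorname{non}(\mathsf{null})$ is the minimal size of a subset of $2^\omega$ that is not Lebesgue null. *)

(* Defs.v *)
From HB Require Import structures.
From mathcomp Require Import all_boot all_order all_algebra.
From mathcomp Require Import boolp classical_sets cardinality.
Set Implicit Arguments. Unset Strict Implicit. Unset Printing Implicit Defensive.
Import Order.TTheory GRing.Theory Num.Theory.

Definition cantor := nat -> bool.

Definition cyl (s : seq bool) : set cantor :=
  [set x | forall i, (i < size s)%N -> x i = nth false s i].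

(* measure of a cylinder under the standard (coin-flipping = Lebesgue) measure *)
Definition cyl_meas (s : seq bool) : rat := ((2%:R : rat) ^+ size s)^-1.

Definition null (A : set cantor) : Prop :=
  forall k : nat, exists s : nat -> seq bool,
    (A `<=` \bigcup_(n in [set: nat]) cyl (s n))%classic /\
    forall N : nat, (\sum_(n < N) cyl_meas (s n) <= ((2%:R : rat) ^+ k)^-1)%R.

Definition null_chain (C : set (set cantor)) : Prop :=
  (C `<=` null)%classic /\
  forall A B, C A -> C B -> (A `<=` B)%classic \/ (B `<=` A)%classic.

Definition maximal_null_chain (C : set (set cantor)) : Prop :=
  null_chain C /\ forall D, null_chain D -> (C `<=` D)%classic -> D = C.

(* Main.v *)
Require Import Defs.
From mathcomp Require Import all_boot all_order all_algebra.
From mathcomp Require Import boolp classical_sets cardinality wochoice.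
From mathcomp Require Import ring functions.
Set Implicit Arguments. Unset Strict Implicit. Unset Printing Implicit Defensive.
Import Order.TTheory GRing.Theory Num.Theory.
Local Open Scope classical_set_scope.
Local Open Scope ring_scope.

Lemma null_sub (A B : set cantor) : B `<=` A -> null A -> null B.
Proof.
move=> BA nA k; have [s [cov bd]] := nA k; exists s; split=> //.
by move=> x /BA /cov.
Qed.

Lemma half_sum (k : nat) :
  (((2%:R : rat) ^+ k.+1)^-1 + ((2%:R : rat) ^+ k.+1)^-1 = ((2%:R : rat) ^+ k)^-1)%R.
Proof.
rewrite exprS invfM.
have h : (2%:R : rat) != 0%R by [].
have h2 : ((2%:R : rat) ^+ k) != 0%R by rewrite expf_neq0.
field. by rewrite h2.
Qed.

Lemma null_add1 (A : set cantor) (p : cantor) : null A -> null (A `|` [set p]).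
Proof.
move=> nA k; have [s [cov bd]] := nA k.+1.
exists (fun n => if n is m.+1 then s m else mkseq p k.+1); split.
  move=> x [/cov [n _ cn]|->]; first by exists n.+1.
  exists 0%N => //= i; rewrite size_mkseq => ik; by rewrite nth_mkseq.
case=> [|N]; first by rewrite big_ord0 invr_ge0 exprn_ge0.
rewrite big_ord_recl /= -half_sum; apply: lerD; last exact: bd.
by rewrite /cyl_meas size_mkseq.
Qed.
Lemma cyl_meas_ge0 s : 0 <= cyl_meas s.
Proof. by rewrite invr_ge0 exprn_ge0. Qed.

Lemma cyl_meas_cons b t : cyl_meas (b :: t) = cyl_meas t / 2%:R.
Proof.
rewrite /cyl_meas /= exprS invfM mulrC.
done.
Qed.

Definition Sb (S : seq (seq bool)) b :=
  [seq behead s | s <- S & ohead s == Some b].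

Lemma sum_half S b :
  \sum_(s <- S | ohead s == Some b) cyl_meas s = (\sum_(t <- Sb S b) cyl_meas t) / 2%:R.
Proof.
rewrite /Sb big_map big_filter mulr_suml; apply: eq_bigr => -[|c t] //= _.
by rewrite cyl_meas_cons.
Qed.

Lemma fin_cover (L : nat) (S : seq (seq bool)) :
  all (fun s => size s <= L)%N S -> (forall x : cantor, exists2 s, s \in S & cyl s x) ->
  1 <= \sum_(s <- S) cyl_meas s.
Proof.
elim: L S => [|L IH] S hS cov; (case: (boolP ([::] \in S)) => hin;
  [rewrite (big_rem _ hin) /= {1}/cyl_meas /= expr0 invr1 lerDl;
   by apply: sumr_ge0 => s _; apply: cyl_meas_ge0|]).
  have [s sS _] := cov (fun _ => false).
  by move: (allP hS s sS); rewrite leqn0 size_eq0 => /eqP s0; rewrite -s0 sS in hin.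
have split : \sum_(s <- S) cyl_meas s =
   \sum_(s <- S | ohead s == Some false) cyl_meas s +
   \sum_(s <- S | ohead s == Some true) cyl_meas s.
  rewrite (big_mkcond (fun s => ohead s == Some false)) (big_mkcond (fun s => ohead s == Some true)).
  rewrite -big_split /=; apply: eq_big_seq => -[|c t] st.
    by rewrite st in hin.
  by case: c st => _ /=; rewrite ?add0r ?addr0.
have IHb b : 1 <= \sum_(t <- Sb S b) cyl_meas t.
  apply: IH.
    apply/allP => t /mapP [s]; rewrite mem_filter => /andP [_ sS] ->.
    by have := allP hS s sS; rewrite size_behead; case: (size s).
  move=> x; have [s sS cs] := cov (fun i => if i is j.+1 then x j else b).
  case: s sS cs => [|c t] sS cs; first by rewrite sS in hin.
  have cb : c = b.
    have := cs 0%N (ltn0Sn _). simpl. move=> h; by rewrite h.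
  idtac.
  exists t.
    apply/mapP; exists (c :: t); last by [].
    by rewrite mem_filter /= -cb eqxx sS.
  by move=> i it; have := cs i.+1; rewrite /= ltnS => /(_ it).
rewrite split !sum_half.
have := IHb false; have := IHb true.
set u := \sum_(t <- _) _; set v := \sum_(t <- _) _ => hu hv.
have e : 1 = (1 : rat) / 2%:R + 1 / 2%:R by field.
rewrite {1}e; apply: lerD; apply: ler_pM => //; by rewrite invr_ge0.
Qed.
Lemma notall (T : Type) (P : T -> Prop) : ~ (forall x, P x) -> exists x, ~ P x.
Proof.
move=> h; apply: contrapT => ne; apply: h => x; apply: contrapT => nPx.
by apply: ne; exists x.
Qed.

Section Konig.
Variable s : nat -> seq bool.
Hypothesis cov : forall x : cantor, exists n, cyl (s n) x.

Definition bad t := forall N, exists x, cyl t x /\ forall n, (n < N)%N -> ~ cyl (s n) x.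

Lemma notbad t : ~ bad t -> exists N, forall x, cyl t x -> exists n, (n < N)%N /\ cyl (s n) x.
Proof.
move=> /notall [N hN]; exists N => x cx; apply: contrapT => hx; apply: hN.
exists x; split=> // n nN cn; apply: hx; by exists n.
Qed.

Lemma cyl_rcons t x : cyl t x -> cyl (rcons t (x (size t))) x.
Proof.
move=> ct i; rewrite size_rcons ltnS leq_eqVlt => /orP [/eqP ->|it].
  by rewrite nth_rcons ltnn eqxx.
by rewrite nth_rcons it; apply: ct.
Qed.

Definition next t := rcons t `[< bad (rcons t true) >].

Lemma bad_next t : bad t -> bad (next t).
Proof.
move=> bt; rewrite /next; case: (pselect (bad (rcons t true))) => h.
  by rewrite (asboolT h).
rewrite (asboolF h); apply: contrapT => h'.
have [N1 h1] := notbad h; have [N0 h0] := notbad h'.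
have [x [cx ux]] := bt (maxn N0 N1).
have := cyl_rcons cx; case: (x (size t)) => /[dup] cr.
  move=> /h1 [n [nN cn]]; apply: (ux n) => //.
  by apply: leq_trans nN _; rewrite leq_maxr.
move=> /h0 [n [nN cn]]; apply: (ux n) => //.
by apply: leq_trans nN _; rewrite leq_maxl.
Qed.

Definition pp n := iter n next [::].

Lemma size_pp n : size (pp n) = n.
Proof. by elim: n => //= n IH; rewrite /next size_rcons IH. Qed.

Hypothesis nofin : ~ exists N, forall x, exists n, (n < N)%N /\ cyl (s n) x.

Lemma bad_pp n : bad (pp n).
Proof.
elim: n => [|n IH] /=; last exact: bad_next.
move=> N.
have /notall [x hx] : ~ forall x, exists n, (n < N)%N /\ cyl (s n) x.
  by move=> h; apply: nofin; exists N.
exists x; split=> // n nN cn; apply: hx; by exists n.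
Qed.

Lemma pp_prefix k n i : (i < n)%N -> nth false (pp (k + n)) i = nth false (pp n) i.
Proof.
move=> i_n; elim: k => //= k IH.
by rewrite /next nth_rcons size_pp (leq_trans i_n (leq_addl _ _)) IH.
Qed.

Definition xlim : cantor := fun i => nth false (pp i.+1) i.

Lemma cyl_xlim n : cyl (pp n) xlim.
Proof.
move=> i; rewrite size_pp => i_n; rewrite /xlim.
by rewrite -(subnK i_n) pp_prefix.
Qed.

Lemma konig_false : False.
Proof.
have [n cn] := cov xlim.
have [y [cy uy]] := bad_pp (size (s n)) n.+1.
apply: (uy n (ltnSn _)) => i i_n.
rewrite cy ?size_pp // -(cn i i_n).
by rewrite (@cyl_xlim (size (s n)) i) ?size_pp.
Qed.

End Konig.

Lemma konig (s : nat -> seq bool) : (forall x : cantor, exists n, cyl (s n) x) ->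
  exists N, forall x, exists n, (n < N)%N /\ cyl (s n) x.
Proof.
move=> cov; apply: contrapT => h; exact: (konig_false cov h).
Qed.

Lemma not_null_T : ~ null [set: cantor].
Proof.
move=> /(_ 1%N) [s [cov bd]].
have [N hN] : exists N, forall x, exists n, (n < N)%N /\ cyl (s n) x.
  by apply: konig => x; have [n _ cn] := cov x I; exists n.
have := bd N.
have h1 : 1 <= \sum_(t <- [seq s n | n <- iota 0 N]) cyl_meas t.
  apply: (@fin_cover (\max_(n < N) size (s n))%N).
    apply/allP => t /mapP [n]; rewrite mem_iota add0n => /andP [_ nN] ->.
    by have := @bigop.leq_bigmax _ (fun i : 'I_N => size (s i)) (Ordinal nN).
  move=> x; have [n [nN cn]] := hN x; exists (s n) => //.
  by apply/mapP; exists n => //; rewrite mem_iota add0n.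
rewrite big_map in h1.
have e : \sum_(i <- iota 0 N) cyl_meas (s i) = \sum_(i < N) cyl_meas (s i).
  by rewrite -(big_mkord xpredT (fun i => cyl_meas (s i))) /index_iota subn0.
rewrite e in h1.
move=> h2; have := le_trans h1 h2.
by rewrite expr1.
Qed.

Lemma card_le_fun T U' (A : set T) (B : set U') (f : T -> U') :
  (forall x, A x -> B (f x)) ->
  (forall x y, A x -> A y -> f x = f y -> x = y) -> (A #<= B)%card.
Proof.
move=> fAB finj.
have : $|{injfun A >-> B}|.
  apply/injfunPex; exists f; first by move=> x Ax; apply: fAB.
  by move=> x y /set_mem Ax /set_mem Ay; apply: finj.
by case=> g; apply: inj_card_le g.
Qed.

Lemma mem_chain C : maximal_null_chain C -> forall N, null N ->
  (forall A, C A -> A `<=` N \/ N `<=` A) -> C N.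
Proof.
move=> [[Cn Cc] Cmax] N nN cmp.
have e := Cmax (C `|` [set N]).
rewrite -e; first by right.
  split; first by move=> A [/Cn|->].
  move=> A B [CA|->] [CB|->].
  - exact: Cc.
  - exact: cmp.
  - by case: (cmp B CB) => h; [right|left].
  - by left.
by move=> A CA; left.
Qed.

Lemma part2 (C : set (set cantor)) : maximal_null_chain C ->
  exists X : set cantor, ~ null X /\ (X #<= C)%card.
Proof.
move=> mC; have [[Cn Cc] Cmax] := mC.
set U := [set x | exists A, C A /\ A x].
have notU : ~ null U.
  move=> nU.
  have CU : C U by apply: mem_chain => // A CA; left => x Ax; exists A.
  have [p Up] : exists p, ~ U p.
    apply: contrapT => h; apply: not_null_T; apply: (null_sub _ nU) => x _.
    by apply: contrapT => nx; apply: h; exists x.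
  have : C (U `|` [set p]).
    apply: mem_chain => //; first exact: null_add1.
    by move=> A CA; left => x Ax; left; exists A.
  by move=> CUp; apply: Up; exists (U `|` [set p]); split=> //; right.
exists U; split=> //.
pose f p := [set x | exists A, C A /\ ~ A p /\ A x].
have fsub p B : C B -> B p -> f p `<=` B.
  move=> CB Bp x [A [CA [nAp Ax]]].
  by case: (Cc A B CA CB) => h; [apply: h|exfalso; apply: nAp; apply: h].
have Cf p : U p -> C (f p).
  move=> [B [CB Bp]]; apply: mem_chain => //.
    by apply: (null_sub (fsub p B CB Bp)); apply: Cn.
  move=> D CD; case: (pselect (D p)) => Dp.
    by right; apply: fsub.
  by left => x Dx; exists D.
have Cfp p : U p -> C (f p `|` [set p]).
  move=> Up; apply: mem_chain => //.
    by apply: null_add1; apply: Cn; apply: Cf.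
  move=> D CD; case: (pselect (D p)) => Dp.
    by right => x [/(fsub p D CD Dp)|->].
  by left => x Dx; left; exists D.
apply: (card_le_fun (f := f)); first by move=> p Up; apply: Cf.
move=> p q Up Uq fpq.
case: (Cc _ _ (Cfp p Up) (Cfp q Uq)) => h.
  case: (h p (or_intror erefl)) => [hq|//].
  have : f p p by rewrite fpq.
  by case=> A [_ []].
case: (h q (or_intror erefl)) => [hp|->//].
have : f q q by rewrite -fpq.
by case=> A [_ []].
Qed.

Section WO.
Variable R : rel cantor.
Hypothesis wR : well_order R.

Lemma wo_min (S : set cantor) : (exists x, S x) ->
  exists z, S z /\ forall y, S y -> R z y.
Proof.
move=> [x Sx].
have ne : nonempty (fun y => `[< S y >]).
  by exists x; rewrite unfold_in; apply: asboolT.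
have [z [[zS lb] _]] := wR ne.
exists z; split.
  by move: zS; rewrite unfold_in => /asboolW.
move=> y Sy; apply: lb; by rewrite unfold_in; apply: asboolT.
Qed.

Lemma R_refl x : R x x.
Proof. by have [z [-> h]] := @wo_min [set x] (ex_intro _ x erefl); apply: h. Qed.

Lemma R_anti x y : R x y -> R y x -> x = y.
Proof.
move=> xy yx.
pose A := fun w => `[< w = x \/ w = y >].
have inA w : (w \in A) = `[< w = x \/ w = y >] by rewrite unfold_in.
have ne : nonempty A by exists x; rewrite inA; apply: asboolT; left.
have [z [_ uz]] := wR ne.
have mx : minimum_of R A x.
  split; first by rewrite inA; apply: asboolT; left.
  move=> w; rewrite inA => /asboolW [->|->] //; exact: R_refl.
have my : minimum_of R A y.
  split; first by rewrite inA; apply: asboolT; right.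
  move=> w; rewrite inA => /asboolW [->|->] //; exact: R_refl.
by rewrite -(uz _ mx) (uz _ my).
Qed.

Lemma R_total x y : R x y \/ R y x.
Proof.
have [z [[->|->] zu]] := @wo_min [set x; y] (ex_intro _ x (or_introl erefl)).
  by left; apply: zu; right.
by right; apply: zu; left.
Qed.

Lemma R_trans x y z : R x y -> R y z -> R x z.
Proof.
move=> xy yz.
have [m [[->|[->|->]] mu]] := @wo_min [set w | w = x \/ w = y \/ w = z] (ex_intro _ x (or_introl erefl)).
- by apply: mu; right; right.
- by have e := R_anti xy (mu x (or_introl erefl)); rewrite e.
- by have e := R_anti yz (mu y (or_intror (or_introl erefl))); rewrite -e.
Qed.

Definition lt x y := R x y /\ x <> y.

Lemma lt_le_trans x y z : lt x y -> R y z -> lt x z.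
Proof.
move=> [xy nxy] yz; split; first exact: R_trans xy yz.
by move=> exz; apply: nxy; rewrite exz in xy *; apply: R_anti.
Qed.

Lemma lt_nle x y : lt x y -> R y x -> False.
Proof. by move=> [xy nxy] yx; apply: nxy; apply: R_anti. Qed.

Lemma lt_total x y : x <> y -> lt x y \/ lt y x.
Proof. by move=> nxy; case: (R_total x y) => h; [left|right]; split => // e; apply: nxy. Qed.

End WO.

Section Part1.
Variable R : rel cantor.
Hypothesis wR : well_order R.

Definition I (Y : set cantor) x := [set y | Y y /\ lt R y x].

Lemma shrink (X : set cantor) : ~ null X -> exists Y, Y `<=` X /\ ~ null Y /\
  forall x, Y x -> null (I Y x).
Proof.
move=> nX.
set Z := [set m | X m /\ ~ null (I X m)].
case: (pselect (exists m, Z m)) => hZ.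
  have [m0 [[Xm0 nm0] m0min]] := wo_min wR hZ.
  exists (I X m0); split; first by move=> x [].
  split => // x [Xx ltx].
  apply: (@null_sub (I X x)); first by move=> y [[Xy _] lty].
  apply: contrapT => nx; apply: (lt_nle wR ltx); exact: m0min.
exists X; split => //; split => // x Xx.
by apply: contrapT => nx; apply: hZ; exists x.
Qed.

Lemma part1_good (Y : set cantor) : ~ null Y -> (forall x, Y x -> null (I Y x)) ->
  exists C : set (set cantor), maximal_null_chain C /\ (C #<= Y)%card.
Proof.
move=> nY hI.
have nomax x : Y x -> exists y, Y y /\ lt R x y.
  move=> Yx; apply: contrapT => h; apply: nY.
  apply: (@null_sub (I Y x `|` [set x])); last by apply: null_add1; apply: hI.
  move=> y Yy; case: (pselect (y = x)) => [->|nyx]; first by right.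
  case: (lt_total wR nyx) => l; first by left.
  by exfalso; apply: h; exists y.
set C := [set A | exists x, Y x /\ A = I Y x].
have Ccmp A B : C A -> C B -> A `<=` B \/ B `<=` A.
  move=> [x [Yx ->]] [y [Yy ->]].
  case: (R_total wR x y) => h; [left|right] => z [Yz l]; split => //;
    exact: (lt_le_trans wR l h).
have Cnull : C `<=` null by move=> A [x [Yx ->]]; apply: hI.
have mC : maximal_null_chain C.
  split; first by split.
  move=> D [Dn Dc] CD; apply/seteqP; split => // N DN.
  have nN := Dn N DN.
  have cmp x : Y x -> I Y x `<=` N \/ N `<=` I Y x.
    by move=> Yx; apply: Dc => //; apply: CD; exists x.
  case: (pselect (exists x, Y x /\ N `<=` I Y x)) => hex; last first.
    exfalso; apply: nY; apply: (null_sub _ nN) => y Yy.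
    have [z [Yz l]] := nomax y Yy.
    case: (cmp z Yz) => h; first by apply: h.
    by exfalso; apply: hex; exists z.
  have [x0 [[Yx0 Nx0] x0min]] := wo_min wR hex.
  have below y : Y y -> lt R y x0 -> I Y y `<=` N.
    move=> Yy l; case: (cmp y Yy) => // h.
    by exfalso; apply: (lt_nle wR l); apply: x0min.
  case: (pselect (exists z, I Y x0 z /\ ~ N z)) => [[z [[Yz lz] nNz]]|hall].
    exists z; split => //; apply/seteqP; split; last exact: below.
    move=> w Nw; have [Yw lw] := Nx0 w Nw; split => //.
    case: (pselect (w = z)) => [ewz|nwz]; first by rewrite ewz in Nw.
    case: (lt_total wR nwz) => // l.
    by exfalso; apply: nNz; apply: (below w Yw lw); split.
  exists x0; split => //; apply/seteqP; split => // v Iv.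
  by apply: contrapT => nv; apply: hall; exists v.
exists C; split => //.
pose g (A : set cantor) : cantor :=
  if pselect (exists x, Y x /\ A = I Y x) is left h then projT1 (cid h) else (fun _ => false).
have gP A : C A -> Y (g A) /\ A = I Y (g A).
  move=> CA; rewrite /g; case: (pselect _) => [h|//]; exact: (projT2 (cid h)).
apply: (card_le_fun (f := g)); first by move=> A /gP [].
move=> A B /gP [_ eA] /gP [_ eB] e.
by rewrite eA eB e.
Qed.

End Part1.

Theorem mainTheorem11 :
  (forall X : set cantor, ~ null X ->
     exists C : set (set cantor), maximal_null_chain C /\ (C #<= X)%card) /\
  (forall C : set (set cantor), maximal_null_chain C ->
     exists X : set cantor, ~ null X /\ (X #<= C)%card).
Proof.
split; last exact: part2.
move=> X nX.
have [R wR] := well_ordering_principle cantor.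
have [Y [YX [nY hY]]] := shrink wR nX.
have [C [mC CY]] := part1_good wR nY hY.
exists C; split => //.
apply: (card_le_trans CY); exact: subset_card_le.
Qed.
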